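(* Let $g$ be any connected undirected graph (system) with diameter $diam(g)$. Every protocol $\pi$ in the state model that is self-stabilizing for the mutual exclusion specification $spec_{EM}$ on $g$ satisfies $temps\_stab(\pi,ds)\ge \lceil diam(g)/2\rceil$, where $ds$ is the synchronous daemon.
   Context: Model (state model with shared variables): a distributed system is a connected undirected graph $g=(V,E)$ whose vertices are processors and edges are communication links; $diam(g)$ is its diameter. Each processor has a unique identity. The state of a processor is the value of its variables; a configuration is the tuple of all processor states. A protocol is a set of rules $\langle guard\rangle \to \langle action\rangle$, where the guard is a predicate on the state of the processor and of its neighbours and the action updates the processor's own state. A processor is enabled if one of its guards is true. In a step, a daemon selects a nonempty subset of the enabled processors, and each selected processor atomically executes its action, all selected processors reading the configuration at the beginning of the step. The synchronous daemon $ds$ selects all enabled processors at every step. Self-stabilization and stabilization time: a protocol $\pi$ is self-stabilizing for $spec$ under daemon $d$ if, from any configuration, every execution of $\pi$ under $d$ contains a configuration from which every execution of $\pi$ under $d$ satisfies $spec$. $temps\_stab(\pi,d)$ is the worst case, over all initial configurations and all executions of $\pi$ under $d$, of the number of steps until such a configuration is reached. Mutual exclusion: each processor $v$ has a predicate $privilege_v$ on its state; $v$ is privileged in a configuration $\gamma$ iff $privilege_v$ is true in $\gamma$; if $v$ is privileged in $\gamma$ and is activated during step $(\gamma,\gamma')$, then $v$ executes its critical section during that step. An execution satisfies $spec_{EM}$ if in every configuration at most one processor is privileged (safety) and every processor executes its critical section infinitely often (liveness). *)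

(* Defs.v *)
From mathcomp Require Import all_boot.
Set Implicit Arguments. Unset Strict Implicit. Unset Printing Implicit Defensive.

(* The system is a simple graph: V : finType, e : rel V symmetric and
   irreflexive; connectedness is [forall x y, connect e x y]. *)

Definition walk (V : finType) (e : rel V) (x y : V) (n : nat) : bool :=
  [exists p : n.-tuple V, path e x p && (last x p == y)].

(* graph distance: least n such that a walk of length n from x to y exists
   (in a connected graph it is < #|V|, so searching in [0, #|V|) suffices) *)
Definition dist (V : finType) (e : rel V) (x y : V) : nat :=
  find (walk e x y) (iota 0 #|V|).

Definition diam (V : finType) (e : rel V) : nat :=
  \max_(x : V) \max_(y : V) dist e x y.

Definition config (V : Type) (S : Type) := V -> S.

(* A protocol: processor v has rules indexed by 'I_(nrules v), each being
   <guard> -> <action>; the guard is a predicate and the action computes the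
   new local state of v.  privilege v is a predicate on the state of v. *)
Record protocol (V : finType) (S : Type) := Protocol {
  nrules : V -> nat;
  guard : forall v : V, 'I_(nrules v) -> config V S -> bool;
  action : forall v : V, 'I_(nrules v) -> config V S -> S;
  privilege : V -> S -> bool
}.

Definition local_protocol (V : finType) (S : Type) (e : rel V)
    (P : protocol V S) : Prop :=
  forall (v : V) (r : 'I_(nrules P v)) (c c' : config V S),
    (forall u, (u == v) || e v u -> c u = c' u) ->
    @guard V S P v r c = @guard V S P v r c' /\ @action V S P v r c = @action V S P v r c'.

Definition enabled (V : finType) (S : Type) (P : protocol V S) (v : V)
    (c : config V S) : bool := [exists r : 'I_(nrules P v), @guard V S P v r c].

Definition enabled_set (V : finType) (S : Type) (P : protocol V S)
    (c : config V S) : {set V} := [set v | enabled P v c].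

(* A daemon says which subsets of the enabled set may be selected. *)
Definition daemon (V : finType) := {set V} -> {set V} -> Prop.

Definition ds {V : finType} : daemon V := fun E A => A = E.

(* If no processor is enabled, the execution is over; we represent this
   (terminal) situation by a stuttering step with no activated processor. *)
Definition step (V : finType) (S : Type) (P : protocol V S) (d : daemon V)
    (c : config V S) (A : {set V}) (c' : config V S) : Prop :=
  if enabled_set P c == set0 then A = set0 /\ c' = c
  else [/\ A != set0, A \subset enabled_set P c, d (enabled_set P c) A &
        forall v, if v \in A then exists2 r : 'I_(nrules P v), @guard V S P v r c
                                  & c' v = @action V S P v r c
                  else c' v = c v].

Definition execution (V : finType) (S : Type) (P : protocol V S)
    (d : daemon V) (gam : nat -> config V S) (A : nat -> {set V}) : Prop :=
  forall i, step P d (gam i) (A i) (gam i.+1).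

(* spec_EM: safety (at most one privileged processor in every configuration)
   and liveness (every processor executes its critical section, i.e. is
   privileged in gam i and activated during step i, infinitely often). *)
Definition spec_EM (V : finType) (S : Type) (P : protocol V S)
    (gam : nat -> config V S) (A : nat -> {set V}) : Prop :=
  (forall i, #|[set v | privilege P v (gam i v)]| <= 1) /\
  (forall (v : V) (n : nat), exists2 i, n <= i &
       privilege P v (gam i v) && (v \in A i)).

Definition legitimate (V : finType) (S : Type) (P : protocol V S)
    (d : daemon V) (c : config V S) : Prop :=
  forall gam A, execution P d gam A -> gam 0 = c -> spec_EM P gam A.

Definition self_stabilizing_EM (V : finType) (S : Type) (P : protocol V S)
    (d : daemon V) : Prop :=
  forall gam A, execution P d gam A -> exists i, legitimate P d (gam i).

(* temps_stab(P,d) >= k: temps_stab is the supremum, over all executions, of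
   the number of steps before the first legitimate configuration; being a
   supremum of naturals it is >= k iff some execution has no legitimate
   configuration among its first k configurations gam 0, ..., gam (k-1). *)
Definition temps_stab_ge (V : finType) (S : Type) (P : protocol V S)
    (d : daemon V) (k : nat) : Prop :=
  exists gam A, execution P d gam A /\
    forall i, i < k -> ~ legitimate P d (gam i).

(* Main.v *)
Require Import Defs.
From mathcomp Require Import all_boot.
From mathcomp Require Import zify.
From Stdlib Require Import FunctionalExtensionality.
Set Implicit Arguments. Unset Strict Implicit. Unset Printing Implicit Defensive.

Lemma walk_cat (V : finType) (e : rel V) x y z a b : walk e x y a -> walk e y z b -> walk e x z (a + b).
Proof.
move=> /existsP[p /andP[p1 /eqP l1]] /existsP[q /andP[q1 /eqP l2]].
apply/existsP; exists (cat_tuple p q) => /=.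
by rewrite cat_path p1 l1 q1 last_cat l1 l2 eqxx.
Qed.

Lemma walk_rcons (V : finType) (e : rel V) x y z n : walk e x y n -> e y z -> walk e x z n.+1.
Proof.
move=> /existsP[p /andP[p1 /eqP l1]] eyz.
apply/existsP; exists (rcons_tuple p z) => /=.
by rewrite rcons_path p1 l1 eyz last_rcons eqxx.
Qed.

Lemma walk_cons (V : finType) (e : rel V) x y z n : e x y -> walk e y z n -> walk e x z n.+1.
Proof.
move=> exy /existsP[p /andP[p1 /eqP l1]].
apply/existsP; exists [tuple of y :: p] => /=.
by rewrite exy p1 l1 eqxx.
Qed.

Lemma walk0 (V : finType) (e : rel V) x : walk e x x 0.
Proof. by apply/existsP; exists (@Tuple 0 V [::] isT) => /=. Qed.

Lemma dist_le (V : finType) (e : rel V) x y n : walk e x y n -> dist e x y <= n.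
Proof.
move=> w; rewrite /dist.
case: (ltnP n #|V|) => hn; last first.
  by apply: leq_trans (find_size _ _) _; rewrite size_iota.
rewrite leqNgt; apply/negP => /(before_find 0).
by rewrite nth_iota // add0n w.
Qed.

Definition lstep (V : finType) (S : Type) (P : protocol V S) (c c' : config V S) (x : V) : Prop :=
  if enabled P x c then exists2 r : 'I_(nrules P x), guard r c & c' x = action r c
  else c' x = c x.

Lemma step_lstep (V : finType) (S : Type) (P : protocol V S) c A c' : step P ds c A c' -> forall x, lstep P c c' x.
Proof.
rewrite /step /lstep; case: eqP => [E0 [_ ->] x|En [_ _ hA h] x].
  have : x \notin enabled_set P c by rewrite E0 inE.
  by rewrite inE => /negbTE ->.
have := h x; rewrite hA inE; by case: (enabled P x c).
Qed.

Lemma lstep_step (V : finType) (S : Type) (P : protocol V S) c c' : (forall x, lstep P c c' x) -> step P ds c (enabled_set P c) c'.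
Proof.
move=> h; rewrite /step; case: eqP => [E0|En].
  split=> //; apply: functional_extensionality => x.
  have := h x; rewrite /lstep.
  have : x \notin enabled_set P c by rewrite E0 inE.
  by rewrite inE => /negbTE ->.
split=> //. all: try (by apply/eqP).
move=> x; have := h x; rewrite /lstep inE; by case: (enabled P x c).
Qed.

Definition nxt (V : finType) (S : Type) (P : protocol V S) (c : config V S) : config V S := fun x =>
  if [pick r | @guard V S P x r c] is Some r then action r c else c x.

Lemma lstep_nxt (V : finType) (S : Type) (P : protocol V S) c x : lstep P c (nxt P c) x.
Proof.
rewrite /lstep /nxt; case: pickP => [r hr|h].
  have -> : enabled P x c by apply/existsP; exists r.
  by exists r.
have -> // : enabled P x c = false.
by apply/negbTE/existsPn => r; rewrite h.
Qed.

Definition itr (V : finType) (S : Type) (P : protocol V S) (c : config V S) (n : nat) : config V S := iter n (nxt P) c.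

Lemma exec_itr (V : finType) (S : Type) (P : protocol V S) c : execution P ds (itr P c) (fun i => enabled_set P (itr P c i)).
Proof. move=> i; apply: lstep_step => x; exact: lstep_nxt. Qed.


Fixpoint gam_of (T : Type) (g0 : T) (f : nat -> T -> T) (n : nat) : T :=
  match n with 0 => g0 | n'.+1 => f n' (gam_of g0 f n') end.

Lemma lstep_transfer (V : finType) (e : rel V) (S : Type) (P : protocol V S)
  (c c' d d' : config V S) x :
  local_protocol e P ->
  (forall y, (y == x) || e x y -> c y = d y) -> lstep P d d' x -> c' x = d' x ->
  lstep P c c' x.
Proof.
move=> loc hyp hd hc.
have H r := loc x r c d hyp.
have E : enabled P x c = enabled P x d.
  by apply/existsP/existsP => -[r hr]; exists r; [rewrite -(H r).1 | rewrite (H r).1].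
move: hd; rewrite /lstep E; case: (enabled P x d).
  by move=> [r hr ha]; exists r; [rewrite (H r).1 | rewrite hc ha (H r).2].
by move=> h; rewrite hc h; symmetry; apply: hyp; rewrite eqxx.
Qed.

Unset Implicit Arguments.
Theorem theorem3 (V : finType) (e : rel V) (S : Type) (P : protocol V S) :
  symmetric e -> irreflexive e -> (forall x y : V, connect e x y) ->
  inhabited S ->
  local_protocol e P ->
  self_stabilizing_EM P ds ->
  temps_stab_ge P ds (uphalf (diam e)).
Proof.
move=> sym _ _ [s0] loc ss.
set D := diam e.
pose c0 : config V S := fun _ => s0.
case: (posnP D) => [D0|Dpos].
  exists (itr P c0), (fun i => enabled_set P (itr P c0 i)); split.
    exact: exec_itr.
  by rewrite D0.
case: (pickP (@predT V)) => [x0 _|h0]; last first.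
  by move: Dpos; rewrite /D /diam big_pred0.
have cV : 0 < #|V| by apply/card_gt0P; exists x0.
have [u hu] := eq_bigmax (fun x => \max_(y : V) dist e x y) cV.
have [v hv] := eq_bigmax (fun y => dist e u y) cV.
have hD : D = dist e u v by rewrite /D /diam hu hv.
have [i0 Li] := ss _ _ (exec_itr P c0).
pose bet t := itr P c0 (i0 + t).
have hb : execution P ds bet (fun t => enabled_set P (bet t)).
  by move=> t; rewrite /bet addnS; apply: exec_itr.
have [safe live] : spec_EM P bet (fun t => enabled_set P (bet t)).
  by apply: Li hb _; rewrite /bet addn0.
set m := (uphalf D).-1.
have m2 : m + m < D.
  rewrite /m uphalf_half; have := odd_double_half D; rewrite -addnn. lia.
have [Tu mTu /andP[pu _]] := live u m.
have [Tv mTv /andP[pv _]] := live v m.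
pose a := Tu - m. pose b := Tv - m.
pose bU r x := [exists n : 'I_r.+1, walk e u x n].
pose bV r x := [exists n : 'I_r.+1, walk e x v n].
have nbU r x y : bU r x -> (y == x) || e x y -> bU r.+1 y.
  move=> /existsP[n hn] /orP[/eqP->|exy]; apply/existsP.
    by exists (widen_ord (leqnSn _) n).
  by exists (@Ordinal r.+2 n.+1 (ltn_ord n)); apply: walk_rcons hn exy.
have nbV r x y : bV r x -> (y == x) || e x y -> bV r.+1 y.
  move=> /existsP[n hn] /orP[/eqP->|exy]; apply/existsP.
    by exists (widen_ord (leqnSn _) n).
  by exists (@Ordinal r.+2 n.+1 (ltn_ord n)); apply: walk_cons hn; rewrite sym.
have disj r x : r <= m -> bU r x -> bV r x -> False.
  move=> rm /existsP[n1 h1] /existsP[n2 h2].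
  have := dist_le (walk_cat h1 h2); rewrite -hD.
  have := ltn_ord n1; have := ltn_ord n2. lia.
pose g0 : config V S := fun x =>
  if bU m x then bet a x else if bV m x then bet b x else c0 x.
pose f (j : nat) (c : config V S) : config V S := fun x =>
  if (j < m) && bU (m - j.+1) x then bet (a + j).+1 x
  else if (j < m) && bV (m - j.+1) x then bet (b + j).+1 x
  else nxt P c x.
pose gam := gam_of g0 f.
have inv j x : j <= m ->
  (bU (m - j) x -> gam j x = bet (a + j) x) /\
  (bV (m - j) x -> gam j x = bet (b + j) x).
  case: j => [_|j jm].
    rewrite !addn0 subn0 /gam /= /g0; split=> [hU|hV]; first by rewrite hU.
    by case: ifP => hU; [case: (disj m x (leqnn _) hU hV) | rewrite hV].
  rewrite /gam /= {1 3}/f jm !addnS /=; split=> [hU|hV]; first by rewrite hU.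
  case: ifP => hU; first by case: (disj (m - j.+1) x (leq_subr _ _) hU hV).
  by rewrite hV.
have stp j x : lstep P (gam j) (gam j.+1) x.
  have Eg : gam j.+1 x = f j (gam j) x by [].
  case hU: ((j < m) && bU (m - j.+1) x).
    move/andP: hU => [jm hU].
    apply: (lstep_transfer (d := bet (a + j)) loc _ (step_lstep (hb _) x)).
      move=> y hy; apply: (proj1 (inv j y (ltnW jm))).
      by have := nbU _ _ _ hU hy; rewrite -subSn // subSS.
    by rewrite Eg /f jm hU.
  case hV: ((j < m) && bV (m - j.+1) x).
    move/andP: hV => [jm hV].
    apply: (lstep_transfer (d := bet (b + j)) loc _ (step_lstep (hb _) x)).
      move=> y hy; apply: (proj2 (inv j y (ltnW jm))).
      by have := nbV _ _ _ hV hy; rewrite -subSn // subSS.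
    by rewrite Eg /f hU jm hV.
  have := lstep_nxt P (gam j) x; rewrite /lstep.
  have -> : gam j.+1 x = nxt P (gam j) x by rewrite Eg /f hU hV.
  done.
have hg : execution P ds gam (fun j => enabled_set P (gam j)).
  by move=> j; apply: lstep_step => x; apply: stp.
have bad : 1 < #|[set w | privilege P w (gam m w)]|.
  have gu : gam m u = bet Tu u.
    rewrite (proj1 (inv m u (leqnn _))) ?subnn; first by rewrite /a subnK.
    by apply/existsP; exists ord0; apply: walk0.
  have gv : gam m v = bet Tv v.
    rewrite (proj2 (inv m v (leqnn _))) ?subnn; first by rewrite /b subnK.
    by apply/existsP; exists ord0; apply: walk0.
  have uv : u != v.
    apply/eqP => euv; move: Dpos; rewrite hD euv.
    by have := dist_le (walk0 e v); rewrite leqn0 => /eqP ->.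
  apply: (@leq_trans #|[set u; v]|); first by rewrite cards2 uv.
  apply: subset_leq_card; apply/subsetP => w.
  by rewrite !inE => /orP[]/eqP->; rewrite ?gu ?gv.
exists gam, (fun j => enabled_set P (gam j)); split => // i hi L.
pose gam' t := gam (i + t).
have hg' : execution P ds gam' (fun t => enabled_set P (gam' t)).
  by move=> t; rewrite /gam' addnS; apply: hg.
have [sf _] : spec_EM P gam' (fun t => enabled_set P (gam' t)).
  by apply: L hg' _; rewrite /gam' addn0.
have := sf (m - i); rewrite /gam' subnKC; first by rewrite leqNgt bad.
by move: hi; rewrite /m; case: (uphalf D) => //= k; rewrite ltnS.
Qed.
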